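(* Consider the normalised two-player, two-market Cournot game with per-period utility $u(x,a)=-2x(x+a)$ for a player playing $x$ against an opponent playing $a$. Let $a_0\neq 0$ be the opponent's strategy at time $0$. Suppose the moving player responds with $c\,a_0$ for some $c\in\mathbb{R}$, and that the opponent, facing the same problem by symmetry, responds at the next step with $c\cdot(c\,a_0)=c^2a_0$. Let $$U_2(c)=u(c\,a_0,a_0)+u(c\,a_0,c^2a_0)$$ be the moving player's total utility over a time horizon of two steps. Then the critical points of $U_2$ on $\mathbb{R}$ are exactly $c=-1$ and $c=-\tfrac13$, and $c=-\tfrac13$ is the unique local maximiser of $U_2$; that is, the optimal response for a time horizon of two moves is $-\frac{a_0}{3}$.
   Context: Two players each have one unit of a homogeneous good (zero production and transportation cost) to split between two markets with inverse-linear demand. A player's strategy is normalised to a number in $[-1,1]$ with $0$ the unique Cournot equilibrium split; the normalised one-period utility (relative to equilibrium) of a player playing $x$ against an opponent playing $a$ is $u(x,a)=-2x(x+a)$. Players update their strategies alternately, each time responding to the opponent's current strategy. *)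

(* Defs.v *)
From Stdlib Require Import Reals.
From Coquelicot Require Import Coquelicot.
Open Scope R_scope.

Definition u (x a : R) : R := -2 * x * (x + a).

Definition U2 (a0 c : R) : R := u (c * a0) a0 + u (c * a0) (c * (c * a0)).

Definition critical_point (f : R -> R) (c : R) : Prop := is_derive f c 0.

Definition local_max (f : R -> R) (c : R) : Prop :=
  exists eps : R, 0 < eps /\ forall y : R, Rabs (y - c) < eps -> f y <= f c.

(* Main.v *)
Require Import Defs.
From Stdlib Require Import Reals Lra Psatz.
From Coquelicot Require Import Coquelicot.
Open Scope R_scope.

Lemma U2_eq a0 c : U2 a0 c = -2 * (a0*a0) * (c*c*c + 2*c*c + c).
Proof. unfold U2, u; ring. Qed.

Lemma U2_der a0 c : is_derive (U2 a0) c (-2 * (a0*a0) * (3*c*c + 4*c + 1)).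
Proof.
  apply (is_derive_ext (fun c => -2 * (a0*a0) * (c*c*c + 2*c*c + c))).
  { intro t; rewrite U2_eq; reflexivity. }
  auto_derive; auto; ring.
Qed.

Theorem theorem2 (a0 : R) (ha0 : a0 <> 0) :
  (forall c : R, ex_derive (U2 a0) c) /\
  (forall c : R, critical_point (U2 a0) c <-> (c = -1 \/ c = -1/3)) /\
  (forall c : R, local_max (U2 a0) c <-> c = -1/3).
Proof.
  assert (Ha : 0 < a0*a0) by (destruct (Rlt_or_le 0 a0) as [H|H]; [nra|]; destruct H as [H|H]; [nra|contradiction]; subst; lra).
  assert (crit : forall c, critical_point (U2 a0) c <-> (c = -1 \/ c = -1/3)).
  { intro c; unfold critical_point; split.
    - intro H. pose proof (is_derive_unique _ _ _ H) as H1.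
      rewrite (is_derive_unique _ _ _ (U2_der a0 c)) in H1.
      assert (E : (3*c+1)*(c+1) = 0) by nra.
      apply Rmult_integral in E; destruct E; [right|left]; lra.
    - intro H. replace 0 with (-2 * (a0*a0) * (3*c*c + 4*c + 1)).
      apply U2_der. destruct H; subst; field. }
  split; [intro c; eexists; apply U2_der|].
  split; [exact crit|].
  intro c; split.
  - intros [eps [Heps Hm]].
    assert (Hd : derivable_pt (U2 a0) c).
    { apply ex_derive_Reals_0. eexists; apply U2_der. }
    assert (Z : derive_pt (U2 a0) c Hd = 0).
    { apply (deriv_maximum _ (c - eps) (c + eps)); [lra|lra|].
      intros x Hx1 Hx2; apply Hm; apply Rabs_def1; lra. }
    rewrite Derive_Reals, (is_derive_unique _ _ _ (U2_der a0 c)) in Z.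
    assert (E : (3*c+1)*(c+1) = 0) by nra.
    apply Rmult_integral in E; destruct E as [E|E]; [lra|].
    exfalso. assert (c = -1) by lra. subst c.
    set (h := Rmin (eps/2) (1/2)).
    assert (0 < h) by (unfold h; apply Rmin_glb_lt; lra).
    assert (h <= eps/2) by apply Rmin_l.
    assert (h <= 1/2) by apply Rmin_r.
    assert (Hy := Hm (-1 + h)).
    rewrite !U2_eq in Hy.
    assert (Rabs (-1 + h - -1) < eps) by (rewrite Rabs_pos_eq; lra).
    specialize (Hy H2).
    assert (0 < h*h) by nra.
    assert (0 < h*h*(1-h)) by nra.
    nra.
  - intros ->. exists 1; split; [lra|]. intros y Hy.
    apply Rabs_def2 in Hy; destruct Hy as [Hy1 Hy2]. rewrite !U2_eq.
    assert (0 <= (y+1/3)*(y+1/3)*(y+4/3)).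
    { apply Rmult_le_pos; [apply Rle_0_sqr|lra]. }
    nra.
Qed.
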